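(* Let $n,k$ be integers with $1<k<n$ and $k>\frac14 n$. Then there exists a $k$-homogeneous partial latin square of order $n$ which is not completable.
   Context: A $k$-homogeneous partial latin square of order $n$ is an $n\times n$ array in which each cell is either blank or contains one of the symbols $\{1,2,\dots,n\}$, such that (i) no symbol occurs twice in any row or any column, (ii) each symbol occurs exactly $k$ times in the array, and (iii) each row and each column contains exactly $k$ filled cells. It is completable if its blank cells can be filled with symbols from $\{1,\dots,n\}$ so as to produce a latin square of order $n$ (an $n\times n$ array in which each symbol occurs exactly once in each row and each column). *)

(* Defs.v *)
From mathcomp Require Import all_boot.
Set Implicit Arguments. Unset Strict Implicit. Unset Printing Implicit Defensive.

(* An n x n array; cell (r,c) is blank (None) or contains a symbol (Some s),
   with symbols {1,..,n} represented by 'I_n = {0,..,n-1}. *)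
Definition parray (n : nat) := 'I_n -> 'I_n -> option 'I_n.

Definition is_partial_latin n (P : parray n) : Prop :=
  (forall (r c1 c2 s : 'I_n), P r c1 = Some s -> P r c2 = Some s -> c1 = c2) /\
  (forall (c r1 r2 s : 'I_n), P r1 c = Some s -> P r2 c = Some s -> r1 = r2).

Definition k_homogeneous_pls n (k : nat) (P : parray n) : Prop :=
  [/\ is_partial_latin P,
      forall s : 'I_n, #|[set rc : 'I_n * 'I_n | P rc.1 rc.2 == Some s]| = k,
      forall r : 'I_n, #|[set c : 'I_n | P r c != None]| = k &
      forall c : 'I_n, #|[set r : 'I_n | P r c != None]| = k].

Definition is_latin_square n (L : 'I_n -> 'I_n -> 'I_n) : Prop :=
  (forall r s : 'I_n, #|[set c : 'I_n | L r c == s]| = 1) /\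
  (forall c s : 'I_n, #|[set r : 'I_n | L r c == s]| = 1).

Definition completable n (P : parray n) : Prop :=
  exists L : 'I_n -> 'I_n -> 'I_n,
    is_latin_square L /\ forall r c s : 'I_n, P r c = Some s -> L r c = s.

(* Main.v *)
Require Import Defs.
From mathcomp Require Import all_boot all_order all_algebra.
From Stdlib Require Import Lia.
Set Implicit Arguments. Unset Strict Implicit. Unset Printing Implicit Defensive.
Import GRing.Theory.

Ltac ssrlia := intros; (repeat match goal with | x := _ |- _ => clearbody x end); (repeat match goal with | H : context [modn _ _] |- _ => clear H end);
  repeat match goal with
  | H : _ \/ _ |- _ => destruct H as [H|H]
  | H : _ /\ _ |- _ => let H2 := fresh in destruct H as [H H2]
  | H : is_true (_ <= _) |- _ => apply (elimT leP) in H
  | H : is_true (_ < _) |- _ => apply (elimT ltP) in H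
  | H : is_true (_ == _) |- _ => apply (elimT eqnP) in H
  | H : is_true (_ != _) |- _ => apply (elimN eqnP) in H
  | H : (_ <= _) = false |- _ => apply negbT in H; rewrite -ltnNge in H
  | H : (_ < _) = false |- _ => apply negbT in H; rewrite -leqNgt in H
  end;
  (try unfold addn, subn, muln, addn_rec, subn_rec, muln_rec in * );
  (match goal with
   | |- is_true (_ <= _) => apply/leP
   | |- is_true (_ < _) => apply/ltP
   | |- is_true (_ == _) => apply/eqnP
   | |- is_true (_ != _) => apply/eqnP
   | _ => idtac end);
  (try unfold addn, subn, muln, addn_rec, subn_rec, muln_rec in * ); lia.

Local Open Scope ring_scope.
Definition band (N' : nat) (D : {set 'I_N'.+1}) (g : 'I_N'.+1 -> 'I_N'.+1) : parray N'.+1 :=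
  fun i j => if (j - i) \in D then Some (i + g (j - i)) else None.

Lemma band_hom N' (D : {set 'I_N'.+1}) g h (hgh : forall d, g d = h d + d)
  (ginj : {in D &, injective g}) (hinj : {in D &, injective h}) :
  k_homogeneous_pls #|D| (band D g).
Proof.
split.
- split.
  + move=> r c1 c2 s; rewrite /band.
    case: ifP => // H1 [<-]; case: ifP => // H2 /Some_inj /(addrI _) E.
    by have := ginj _ _ H2 H1 E => /(addIr _).
  + move=> c r1 r2 s; rewrite /band.
    case: ifP => // H1 [<-]; case: ifP => // H2 E.
    have e1 : forall r : 'I_N'.+1, r + g (c - r) = c + h (c - r).
      by move=> r; rewrite hgh addrCA [r + (c - r)]addrC subrK addrC.
    move: E; rewrite !e1 => /Some_inj /(addrI _) E.
    by have := hinj _ _ H2 H1 E => /(addrI _) /oppr_inj.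
- move=> s.
  rewrite -(card_in_imset (f := fun d => (s - g d, s - g d + d))); last first.
    move=> d1 d2 H1 H2 /(congr1 fst) /= E.
    by apply: ginj => //; apply: oppr_inj; apply: (addrI s).
  apply: eq_card => -[i j]; rewrite inE /band /=.
  apply/eqP/imsetP.
  + case: ifP => // H [<-]; exists (j - i) => //.
    have -> : i + g (j - i) - g (j - i) = i by apply: addrK.
    by rewrite addrC subrK.
  + case=> d Hd [-> ->].
    have -> : s - g d + d - (s - g d) = d by rewrite addrC addKr.
    by rewrite Hd subrK.
- move=> r.
  rewrite -[RHS](card_imset _ (addIr r)).
  apply: eq_card => j; rewrite inE /band.
  apply/idP/imsetP.
  + by case: ifP => // H _; exists (j - r) => //; rewrite subrK.
  + by case=> d Hd ->; rewrite addrK Hd.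
- move=> c.
  rewrite -[RHS](card_imset _ (subrI c)).
  apply: eq_card => i; rewrite inE /band.
  apply/idP/imsetP.
  + by case: ifP => // H _; exists (c - i) => //; rewrite opprB addrC subrK.
  + by case=> d Hd ->; rewrite opprB addrC subrK Hd.
Qed.
Lemma dead_cell n (P : parray n) r c : P r c = None ->
  (forall s, (exists c', P r c' = Some s) \/ (exists r', P r' c = Some s)) ->
  ~ completable P.
Proof.
move=> Hb Hcov [L [[Hr Hc] HL]].
case: (Hcov (L r c)) => [[c' Hc']|[r' Hr']].
- have E := HL _ _ _ Hc'.
  have Hne : c != c' by apply/eqP => Ec; rewrite Ec Hc' in Hb.
  have : [set c; c'] \subset [set x | L r x == L r c].
    by apply/subsetP => x; rewrite !inE => /orP[/eqP->|/eqP->]; rewrite ?E eqxx.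
  by move/subset_leq_card; rewrite Hr cards2 Hne.
- have E := HL _ _ _ Hr'.
  have Hne : r != r' by apply/eqP => Ec; rewrite Ec Hr' in Hb.
  have : [set r; r'] \subset [set x | L x c == L r c].
    by apply/subsetP => x; rewrite !inE => /orP[/eqP->|/eqP->]; rewrite ?E eqxx.
  by move/subset_leq_card; rewrite Hc cards2 Hne.
Qed.

Lemma band_dead N' (D : {set 'I_N'.+1}) g h (hgh : forall d, g d = h d + d) (c : 'I_N'.+1) :
  c \notin D ->
  (forall s, (exists2 d, d \in D & g d = s) \/ (exists2 d, d \in D & c + h d = s)) ->
  ~ completable (band D g).
Proof.
move=> Hc Hcov; apply: (@dead_cell _ _ 0 c).
  by rewrite /band subr0 (negbTE Hc).
move=> s; case: (Hcov s) => [[d Hd <-]|[d Hd <-]].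
- by left; exists d; rewrite /band subr0 Hd add0r.
- right; exists (c - d); rewrite /band.
  have -> : c - (c - d) = d by rewrite opprB addrC subrK.
  by rewrite Hd hgh addrCA addrC addrNK addrC.
Qed.







Definition DK N' t (ev : bool) : {set 'I_N'.+1} :=
  [set d : 'I_N'.+1 | ((d < (2*t).+1)%N) && (~~ ev || (val d != t))].
Definition gK N' t (d : 'I_N'.+1) : 'I_N'.+1 :=
  inZp (if (d <= t)%N then (2 * d)%N else (2 * d - (2*t).+1)%N).
Definition hK N' t (d : 'I_N'.+1) : 'I_N'.+1 :=
  inZp (if (d <= t)%N then val d else (N'.+1 + d - (2*t).+1)%N).
Arguments DK : clear implicits.
Arguments gK : clear implicits.
Arguments hK : clear implicits.

Lemma hghK N' t (HK : ((2*t).+1 <= N'.+1)%N) d : gK N' t d = hK N' t d + d.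
Proof.
apply: val_inj => /=; rewrite /gK /hK /=; case: ifP => Hd /=; rewrite modnDml.
  by rewrite addnn -mul2n.
have Hdn := ltn_ord d.
rewrite (_ : (N'.+1 + d - (2 * t).+1 + d = (2 * d - (2 * t).+1) + N'.+1)%N) ?modnDr //.
ssrlia.
Qed.

Lemma gK_inj N' t (HK : ((2*t).+1 <= N'.+1)%N) ev : {in DK N' t ev &, injective (gK N' t)}.
Proof.
move=> d1 d2; rewrite !inE => /andP[H1 _] /andP[H2 _] /(congr1 val) /=.
rewrite /gK /=; move=> E; apply: ord_inj; move: E.
case: ifP => A; case: ifP => B; rewrite !modn_small; try ssrlia.
Qed.

Lemma hK_inj N' t (HK : ((2*t).+1 <= N'.+1)%N) ev : {in DK N' t ev &, injective (hK N' t)}.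
Proof.
move=> d1 d2; rewrite !inE => /andP[H1 _] /andP[H2 _] /(congr1 val) /=.
have L1 := ltn_ord d1; have L2 := ltn_ord d2.
rewrite /hK /=; move=> E; apply: ord_inj; move: E.
case: ifP => A; case: ifP => B; rewrite !modn_small; try ssrlia.
Qed.

Lemma card_ltK N' K (HK : (K <= N'.+1)%N) : #|[set d : 'I_N'.+1 | (d < K)%N]| = K.
Proof.
have winj : injective (widen_ord HK) by move=> a b /(congr1 val) /= /ord_inj.
rewrite -[RHS](card_ord K) -cardsT -(card_imset _ winj).
apply: eq_card => x; rewrite !inE; apply/idP/imsetP.
  by move=> Hx; exists (Ordinal Hx) => //; apply: val_inj.
by case=> y _ ->; rewrite /= ltn_ord.
Qed.

Lemma card_DK N' t ev (HK : ((2*t).+1 <= N'.+1)%N) :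
  #|DK N' t ev| = if ev then (2 * t)%N else (2 * t).+1.
Proof.
case: ev; last first.
  by rewrite -(card_ltK HK); apply: eq_card => x; rewrite !inE orTb andbT.
have Ht : (t < N'.+1)%N by ssrlia.
have Ht2 : (t < (2 * t).+1)%N by ssrlia.
have := card_ltK HK; rewrite (cardsD1 (Ordinal Ht)) inE /= Ht2 add1n => E.
suff <- : #|[set d : 'I_N'.+1 | (d < (2 * t).+1)%N] :\ Ordinal Ht| = #|DK N' t true|.
  by case: E.
apply: eq_card => x; rewrite !inE /= andbC.
by congr (_ && _); rewrite -val_eqE /=.
Qed.

Lemma inZpV N' x : (x < N'.+1)%N -> nat_of_ord (inZp x : 'I_N'.+1) = x.
Proof. by move=> H; rewrite /= modn_small. Qed.

Lemma valDZ N' (a b : 'I_N'.+1) : nat_of_ord (a + b) = ((a + b) %% N'.+1)%N.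
Proof. by []. Qed.

Definition cvK N' t (ev : bool) :=
  if ev then maxn (2*t).+1 (N'.+1 - t) else maxn (2*t).+1 (N'.+1 - t.+1).

Lemma coverK N' t (ev : bool) (Ht : (0 < t)%N) (HKN : ((2*t).+1 < N'.+1)%N)
  (H2k : (N'.+1 <= 2 * (if ev then 2*t else (2*t).+1))%N) (s : 'I_N'.+1) :
   (exists2 d, d \in DK N' t ev & gK N' t d = s) \/
   (exists2 d, d \in DK N' t ev & inZp (cvK N' t ev) + hK N' t d = s).
Proof.
have Hs := ltn_ord s.
have Hsd := odd_double_half s; rewrite -mul2n in Hsd.
have [Hc1 Hc2 Hc3] : [/\ ((2*t).+1 <= cvK N' t ev)%N,
   (N'.+1 - (if ev then t else t.+1) <= cvK N' t ev)%N &
   (cvK N' t ev < N'.+1)%N].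
  rewrite /cvK; case: ev H2k => H2k; rewrite leq_maxl leq_maxr gtn_max;
    (split => //; apply/andP; split; ssrlia).
have Hcv : (cvK N' t ev = (2*t).+1 \/ cvK N' t ev = N'.+1 - (if ev then t else t.+1))%N.
  rewrite /cvK; case: ev {Hc1 Hc2 Hc3 H2k}; rewrite /maxn; case: ifP => _; by [left|right].
set cv := cvK N' t ev in Hc1 Hc2 Hc3 Hcv *.
case: (boolP (((s < (2*t).+1)%N && ~~ (ev && (nat_of_ord s == (2*t)%N))))) => Hrow.
- left; case/andP: Hrow => Hs1 Hs2.
  case Ho: (odd s) Hsd => /= Hsd.
  + have Hv : ((s./2 + t.+1) %% N'.+1 = s./2 + t.+1)%N.
      by apply: modn_small; ssrlia.
    exists (inZp (s./2 + t.+1)).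
      rewrite inE /= Hv; apply/andP; split; first by ssrlia.
      by destruct ev; simpl in *; (try done); ssrlia.
    apply: ord_inj; rewrite /gK /= Hv.
    case: ifP => H; first by ssrlia.
    by rewrite modn_small; ssrlia.
  + have Hv : ((s./2) %% N'.+1 = s./2)%N.
      by apply: modn_small; ssrlia.
    exists (inZp (s./2)).
      rewrite inE /= Hv; apply/andP; split; first by ssrlia.
      by destruct ev; simpl in *; (try done); ssrlia.
    apply: ord_inj; rewrite /gK /= Hv.
    case: ifP => H; last by ssrlia.
    by rewrite modn_small; ssrlia.
- right.
  have Hrow' : ((2*t).+1 <= s \/ (if ev then nat_of_ord s = (2*t)%N else False))%N.
    move: Hrow; rewrite negb_and negbK.
    case: (leqP (2*t).+1 s) => H; [by left|rewrite /= => /andP[A /eqP B]; right].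
    by rewrite A.
  case: (leqP cv s) => Hc.
  + have Hv : ((s - cv) %% N'.+1 = s - cv)%N.
      by apply: modn_small; ssrlia.
    exists (inZp (s - cv)).
      rewrite inE /= Hv; apply/andP; split.
        by destruct ev; simpl in *; (try done); ssrlia.
      by destruct ev; simpl in *; (try done); ssrlia.
    apply: ord_inj; rewrite valDZ /hK /= Hv.
    case: ifP => H; last by destruct ev; simpl in *; (try done); ssrlia.
    rewrite (@modn_small cv) // (@modn_small (s - cv)); last by ssrlia.
    rewrite (_ : (cv + (s - cv) = s)%N) ?modn_small //; ssrlia.
  + have Hv : (((2*t).+1 + s - cv) %% N'.+1 = (2*t).+1 + s - cv)%N.
      by apply: modn_small; destruct ev; simpl in *; (try done); ssrlia.
    exists (inZp ((2*t).+1 + s - cv)).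
      rewrite inE /= Hv; apply/andP; split.
        by destruct ev; simpl in *; (try done); ssrlia.
      by destruct ev; simpl in *; (try done); ssrlia.
    apply: ord_inj; rewrite valDZ /hK /= Hv.
    case: ifP => H; first by destruct ev; simpl in *; (try done); ssrlia.
    rewrite (@modn_small cv) //.
    rewrite (_ : (N'.+1 + ((2 * t).+1 + s - cv) - (2 * t).+1 = N'.+1 - (cv - s))%N); last first.
      by destruct ev; simpl in *; (try done); ssrlia.
    rewrite (@modn_small (N'.+1 - (cv - s))); last by ssrlia.
    rewrite (_ : (cv + (N'.+1 - (cv - s)) = s + N'.+1)%N) ?modnDr ?modn_small //.
    by destruct ev; simpl in *; (try done); ssrlia.
Qed.

Lemma caseB n k (hk1 : (1 < k)%N) (hkn : (k < n)%N) (h2k : (n <= 2 * k)%N)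
  (hC : ~~ (odd n && (k == n.-1))) :
  exists P : parray n, k_homogeneous_pls k P /\ ~ completable P.
Proof.
case: n hkn h2k hC => [//|N'] hkn h2k hC.
set t := k./2; set ev := ~~ odd k.
have Hk := odd_double_half k; rewrite -mul2n in Hk.
have Et : t = k./2 by [].
have Ht : (0 < t)%N by rewrite /t; case: (odd k) Hk => /= Hk; ssrlia.
have HKN : ((2*t).+1 < N'.+1)%N.
  rewrite /t; case Ho: (odd k) Hk => /= Hk; first by ssrlia.
  have : k != N'.
    apply/eqP => E; move: hC Ho; rewrite E /= eqxx andbT => hC Ho.
    by rewrite Ho in hC.
  by move=> H; ssrlia.
have HK := ltnW HKN.
have Hcard : #|DK N' t ev| = k.
  by rewrite card_DK // /ev; case: (odd k) Hk => /= Hk; ssrlia.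
exists (band (DK N' t ev) (gK N' t)); split.
  rewrite -Hcard; apply: (band_hom (h := hK N' t)).
  - exact: hghK.
  - exact: gK_inj.
  - exact: hK_inj.
apply: (band_dead (hghK HK) (c := inZp (cvK N' t ev))).
  rewrite inE /= negb_and; apply/orP; left.
  rewrite modn_small; last first.
    by rewrite /cvK; destruct ev; rewrite gtn_max; apply/andP; split; ssrlia.
  by rewrite -leqNgt /cvK; destruct ev; rewrite leq_maxl.
apply: coverK => //.
by rewrite /ev; case: (odd k) Hk => /= Hk; ssrlia.
Qed.

Definition DC N'' : {set 'I_N''.+3} := [set d | d != -1].
Definition gC N'' (d : 'I_N''.+3) : 'I_N''.+3 := - d.
Definition swC N'' (i j : 'I_N''.+3) : 'I_N''.+3 :=
  if i == 0 then (if j == 0 then -2 else if j == -2 then 0 else j) else j.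
Definition PC N'' : parray N''.+3 := fun i j => band (DC N'') (@gC N'') i (swC i j).
Arguments DC : clear implicits.
Arguments PC : clear implicits.

Lemma two_inj N'' (x : 'I_N''.+3) : odd N''.+3 -> x *+ 2 = 0 -> x = 0.
Proof.
move=> Ho; rewrite Zp_mulrn => /(congr1 val) /= /eqP.
rewrite -/(dvdn _ _) Gauss_dvdl ?coprimen2 // => Hd.
apply: ord_inj => /=; move: Hd; case: (nat_of_ord x) (ltn_ord x) => [//|m] Hm.
by move/(dvdn_leq (ltn0Sn _)); rewrite leqNgt Hm.
Qed.

Lemma two_inj2 N'' (x y : 'I_N''.+3) : odd N''.+3 -> x *+ 2 = y *+ 2 -> x = y.
Proof.
move=> Ho /eqP; rewrite -subr_eq0 -mulrnBl => /eqP /(two_inj Ho) /eqP.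
by rewrite subr_eq0 => /eqP.
Qed.

Lemma swCK N'' (i : 'I_N''.+3) : involutive (swC i).
Proof.
have H20 : ((-2 : 'I_N''.+3) == 0) = false by rewrite oppr_eq0.
move=> j; rewrite /swC; case: (i == 0) => //.
case: (eqVneq j 0) => [->|j0]; first by rewrite H20 eqxx.
case: (eqVneq j (-2)) => [->|j2]; first by rewrite eqxx.
by rewrite (negbTE j0) (negbTE j2).
Qed.

Lemma swC_inj N'' (i : 'I_N''.+3) : injective (swC i).
Proof. exact: inv_inj (swCK i). Qed.

Lemma bandC N'' (i j : 'I_N''.+3) :
  band (DC N'') (@gC N'') i j = if j - i != -1 then Some (i - (j - i)) else None.
Proof. by rewrite /band inE. Qed.

Lemma homC0 N'' (Ho : odd N''.+3) :
  k_homogeneous_pls #|DC N''| (band (DC N'') (@gC N'')).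
Proof.
apply: (band_hom (h := fun d => - (d *+ 2))).
- by move=> d; rewrite /gC mulr2n opprD addrNK.
- by move=> a b _ _; apply: oppr_inj.
- by move=> a b _ _ /oppr_inj; apply: two_inj2.
Qed.

Lemma colC N'' (Ho : odd N''.+3) (r2 c s : 'I_N''.+3) : r2 != 0 ->
  PC N'' 0 c = Some s -> PC N'' r2 c = Some s -> False.
Proof.
move=> r20; rewrite /PC /swC eqxx (negbTE r20).
case: (eqVneq c 0) => [->|c0].
  rewrite !bandC !subr0 !sub0r !opprK.
  have -> : (-2 != -1 :> 'I_N''.+3).
    by apply/eqP => /oppr_inj/eqP; rewrite -subr_eq0 addrK oner_eq0.
  move=> [<-]; case: ifP => // H /Some_inj /eqP.
  rewrite -mulr2n -[X in _ == X]/(1 *+ 2) => /eqP /(two_inj2 Ho) E.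
  by move: H; rewrite E eqxx.
case: (eqVneq c (-2)) => [->|c2]; last first.
  move=> H1 H2; case: (homC0 Ho) => [[_ Hc] _ _ _].
  by move: r20; rewrite -(Hc _ _ _ _ H1 H2) eqxx.
rewrite !bandC !subrr ?subr0.
have -> : (0 : 'I_N''.+3) != -1 by rewrite eq_sym oppr_eq0 oner_eq0.
move=> [<-]; case: ifP => // H /Some_inj /eqP.
have -> : r2 - (-2 - r2) = (r2 + 1) *+ 2.
  by rewrite opprB opprK mulrnDl mulr2n addrA.
rewrite -[X in _ == X](mul0rn _ 2) => /eqP /(two_inj2 Ho) /eqP.
rewrite addr_eq0 => /eqP E; move: H; rewrite E.
by rewrite opprK -[2]/(1 + 1) opprD addrNK eqxx.
Qed.

Lemma card_DC N'' : #|DC N''| = N''.+2.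
Proof.
apply: (@etrans _ _ #|[set~ (-1 : 'I_N''.+3)]|).
  by apply: eq_card => x; rewrite !inE.
by rewrite cardsC1 card_ord.
Qed.

Lemma PC_fill N'' (i j : 'I_N''.+3) : (PC N'' i j != None) = (band (DC N'') (@gC N'') i j != None).
Proof.
rewrite /PC /swC; case: (eqVneq i 0) => [->|//].
have H20 : ((-2 : 'I_N''.+3) == 0) = false by rewrite oppr_eq0.
have Hm : ((0 : 'I_N''.+3) == -1) = false by rewrite eq_sym oppr_eq0 oner_eq0.
have Hm2 : ((-2 : 'I_N''.+3) == -1) = false.
  by apply/eqP => /oppr_inj/eqP; rewrite -subr_eq0 addrK oner_eq0.
case: (eqVneq j 0) => [->|j0]; first by rewrite !bandC !subr0 Hm Hm2.
case: (eqVneq j (-2)) => [->|j2]; first by rewrite !bandC !subr0 Hm Hm2.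
by [].
Qed.

Lemma caseC N'' (Ho : odd N''.+3) :
  exists P : parray N''.+3, k_homogeneous_pls N''.+2 P /\ ~ completable P.
Proof.
have [[Hr0 Hc0] Hs0 Hrow0 Hcol0] := homC0 Ho.
rewrite card_DC in Hs0 Hrow0 Hcol0.
exists (PC N''); split.
  split.
  - split.
    + move=> r c1 c2 s; rewrite /PC => H1 H2.
      exact: (swC_inj (Hr0 _ _ _ _ H1 H2)).
    + move=> c r1 r2 s H1 H2.
      case: (eqVneq r1 0) => [E1|n1]; case: (eqVneq r2 0) => [E2|n2].
      * by rewrite E1 E2.
      * by rewrite E1 in H1; case: (colC Ho n2 H1 H2).
      * by rewrite E2 in H2; case: (colC Ho n1 H2 H1).
      * by move: H1 H2; rewrite /PC /swC (negbTE n1) (negbTE n2); apply: Hc0.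
  - move=> s; apply: (etrans _ (Hs0 s)).
    rewrite -[RHS](card_preimset _ (f := fun x : 'I_N''.+3 * 'I_N''.+3 => (x.1, swC x.1 x.2))).
      by apply: eq_card => x; rewrite !inE.
    by move=> [a b] [c d] [-> /swC_inj ->].
  - move=> r; apply: (etrans _ (Hrow0 r)).
    rewrite -[RHS](card_preimset _ (@swC_inj _ r)).
    by apply: eq_card => x; rewrite !inE.
  - move=> c; apply: (etrans _ (Hcol0 c)); apply: eq_card => x; rewrite !inE.
    by rewrite PC_fill.
apply: (@dead_cell _ _ 1 0).
  by rewrite /PC /swC oner_eq0 /= bandC sub0r eqxx.
move=> s; case: (eqVneq s 2) => [->|s2].
  right; exists 0; rewrite /PC /swC eqxx /= bandC subr0 sub0r opprK.
  have -> // : (-2 != -1 :> 'I_N''.+3).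
  by apply/eqP => /oppr_inj/eqP; rewrite -subr_eq0 addrK oner_eq0.
left; exists (2 - s); rewrite /PC /swC oner_eq0 /= bandC.
have E2 : (2 : 'I_N''.+3) = 1 + 1 by [].
have E1 : (2 : 'I_N''.+3) - s - 1 = 1 - s by rewrite E2 addrAC addrK.
rewrite E1.
have -> : 1 - s != -1.
  apply: contra s2 => /eqP H; apply/eqP.
  have -> : s = 1 - (1 - s) by rewrite opprB addrC subrK.
  by rewrite H opprK -E2.
by rewrite opprB addrC subrK.
Qed.

Local Open Scope nat_scope.

Lemma sumcard (T : finType) (P b : pred T) :
  \sum_(c | P c) (b c : nat) = #|[set c | P c && b c]|.
Proof.
rewrite -sum1_card [RHS]big_mkcond [LHS]big_mkcond /=; apply: eq_bigr => c _.
by rewrite inE; case: (P c); case: (b c).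
Qed.

Lemma card_lt m K (HK : K <= m) : #|[set d : 'I_m | d < K]| = K.
Proof.
have winj : injective (widen_ord HK) by move=> a b /(congr1 val) /= /ord_inj.
rewrite -[RHS](card_ord K) -cardsT -(card_imset _ winj).
apply: eq_card => x; rewrite !inE; apply/idP/imsetP.
  by move=> Hx; exists (Ordinal Hx) => //; apply: val_inj.
by case=> y _ ->; rewrite /= ltn_ord.
Qed.

Lemma card_ge m K (HK : K <= m) : #|[set d : 'I_m | K <= d]| = m - K.
Proof.
have := cardsC [set d : 'I_m | d < K]; rewrite card_lt // card_ord => E.
apply: (@etrans _ _ #|~: [set d : 'I_m | d < K]|).
  by apply: eq_card => x; rewrite !inE leqNgt.
by rewrite -[in RHS]E addKn.
Qed.

Lemma latin_row_inj n (L : 'I_n -> 'I_n -> 'I_n) : is_latin_square L -> forall r, injective (L r).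
Proof.
move=> [Hr _] r c1 c2 E.
have := Hr r (L r c1); move/eqP/cards1P => [x Hx].
have : c1 \in [set x]; first by rewrite -Hx inE.
have : c2 \in [set x]; first by rewrite -Hx inE E.
by rewrite !inE => /eqP -> /eqP ->.
Qed.

Lemma latin_col_inj n (L : 'I_n -> 'I_n -> 'I_n) : is_latin_square L -> forall c, injective (L^~ c).
Proof.
move=> [_ Hc] c r1 r2 E.
have := Hc c (L r1 c); move/eqP/cards1P => [x Hx].
have : r1 \in [set x]; first by rewrite -Hx inE.
have : r2 \in [set x]; first by rewrite -Hx inE /= E.
by rewrite !inE => /eqP -> /eqP ->.
Qed.

Lemma le_sub_of_add a b p k : a + b = p -> k <= a -> b <= p - k.
Proof. move=> E H; ssrlia. Qed.

Lemma ge_of_add a b c q p k : a + b = p -> k <= c -> c + b = q -> p + k - q <= a.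
Proof. move=> E H1 H2; ssrlia. Qed.

Lemma arith_final p Q k : k <= Q -> Q <= p -> p * p + Q * Q < (p + Q) * k + p * Q ->
  Q * (p + k - Q) <= p * (p - k) -> False.
Proof.
move=> H1 H2.
have [b Eb] : exists b, Q = b + k by exists (Q - k); rewrite subnK.
have [a Ea] : exists a, p = a + Q by exists (p - Q); rewrite subnK.
subst p Q.
have -> : a + (b + k) + k - (b + k) = a + k by ssrlia.
have -> : a + (b + k) - k = a + b by ssrlia.
move/leP => H3 /leP H4; clear H1 H2.
unfold addn, subn, muln, addn_rec, subn_rec, muln_rec in * ; nia.
Qed.

Lemma sum_const_cond (T : finType) (P : pred T) C :
  \sum_(i | P i) C = #|[set i | P i]| * C.
Proof. by rewrite -sum_nat_const; apply: eq_bigl => i; rewrite inE. Qed.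

Lemma block_obstruction n p k (P : parray n) (Hp : p <= n) :
  k <= n - p -> n - p <= p ->
  k_homogeneous_pls k P ->
  (forall r c s, P r c = Some s -> (r < p) = (c < p) /\ (r < p) = (s < p)) ->
  p * p + (n - p) * (n - p) < n * k + p * (n - p) ->
  ~ completable P.
Proof.
move=> Hkq Hqp [_ _ Hrow Hcol] Hblk Hnum [L [HL HPL]].
set q := n - p in Hkq Hqp Hnum.
have Rinj := latin_row_inj HL; have Cinj := latin_col_inj HL.
set chi := fun r c => (L r c < p) : nat.
have Hrowsum : forall r : 'I_n, \sum_(c | true) chi r c = p.
  move=> r; rewrite /chi (sumcard xpredT (fun c => L r c < p)).
  rewrite -[RHS](card_lt Hp) -[RHS](card_preimset _ (Rinj r)).
  by apply: eq_card => c; rewrite !inE.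
have Hcolsum : forall c : 'I_n, \sum_(r | true) chi r c = p.
  move=> c; rewrite /chi (sumcard xpredT (fun r => L r c < p)).
  rewrite -[RHS](card_lt Hp) -[RHS](card_preimset _ (Cinj c)).
  by apply: eq_card => r; rewrite !inE.
have Hrow1 : forall r : 'I_n, r < p -> k <= \sum_(c : 'I_n | c < p) chi r c.
  move=> r Hr; rewrite /chi sumcard -(Hrow r); apply: subset_leq_card.
  apply/subsetP => c; rewrite !inE.
  case Hrc: (P r c) => [s|] // _.
  have [E1 E2] := Hblk _ _ _ Hrc.
  by rewrite -E1 Hr (HPL _ _ _ Hrc) -E2 Hr.
have Hcol1 : forall c : 'I_n, p <= c -> k <= \sum_(r : 'I_n | p <= r) (1 - chi r c).
  move=> c Hc.
  have -> : \sum_(r : 'I_n | p <= r) (1 - chi r c) = \sum_(r : 'I_n | p <= r) ((~~ (L r c < p)) : nat).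
    by apply: eq_bigr => r _; rewrite /chi; case: (L r c < p).
  rewrite sumcard -(Hcol c); apply: subset_leq_card.
  apply/subsetP => r; rewrite !inE.
  case Hrc: (P r c) => [s|] // _.
  have [E1 E2] := Hblk _ _ _ Hrc.
  by rewrite leqNgt E1 ltnNge Hc /= (HPL _ _ _ Hrc) -E2 E1 ltnNge Hc.
have Hp' : #|[set r : 'I_n | r < p]| = p by rewrite card_lt.
have Hq' : #|[set r : 'I_n | p <= r]| = q by rewrite card_ge.
set Z := \sum_(r : 'I_n | r < p) \sum_(c : 'I_n | p <= c) chi r c.
have HZ1 : Z <= p * (p - k).
  apply: (@leq_trans (\sum_(r : 'I_n | r < p) (p - k))); last by rewrite sum_const_cond Hp'.
  apply: leq_sum => r Hr.
  have E := Hrowsum r; rewrite (bigID (fun c : 'I_n => c < p)) /= in E.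
  have EB : \sum_(c : 'I_n | ~~ (c < p)) chi r c = \sum_(c : 'I_n | p <= c) chi r c.
    by apply: eq_bigl => c; rewrite -leqNgt.
  rewrite EB in E; exact: (le_sub_of_add E (Hrow1 r Hr)).
have HZ2 : q * (p + k - q) <= Z.
  rewrite /Z exchange_big /=.
  apply: (@leq_trans (\sum_(c : 'I_n | p <= c) (p + k - q))); first by rewrite sum_const_cond Hq'.
  apply: leq_sum => c Hc.
  have E := Hcolsum c; rewrite (bigID (fun r : 'I_n => r < p)) /= in E.
  have EB : \sum_(r : 'I_n | ~~ (r < p)) chi r c = \sum_(r : 'I_n | p <= r) chi r c.
    by apply: eq_bigl => r; rewrite -leqNgt.
  rewrite EB in E.
  have H1 := Hcol1 c Hc.
  have H2 : \sum_(r : 'I_n | p <= r) (1 - chi r c) + \sum_(r : 'I_n | p <= r) chi r c = q.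
    rewrite -big_split /=.
    rewrite (eq_bigr (fun _ => 1)) ?sum_const_cond ?Hq' ?muln1 // => r _.
    by rewrite /chi; case: (L r c < p).
  exact: (ge_of_add E H1 H2).
have Hfin : q * (p + k - q) <= p * (p - k) by apply: leq_trans HZ2 HZ1.
have En : n = p + q by rewrite /q subnKC.
rewrite En in Hnum.
exact: (arith_final Hkq Hqp Hnum Hfin).
Qed.

Definition bdiag p q (P1 : parray p) (P2 : parray q) : parray (p + q) :=
  fun i j => match split i, split j with
  | inl a, inl b => omap (@lshift p q) (P1 a b)
  | inr a, inr b => omap (@rshift p q) (P2 a b)
  | _, _ => None end.

Lemma split_l p q (a : 'I_p) : split (@lshift p q a) = inl a.
Proof. exact: (@unsplitK p q (inl a)). Qed.
Lemma split_r p q (a : 'I_q) : split (@rshift p q a) = inr a.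
Proof. exact: (@unsplitK p q (inr a)). Qed.
Lemma lr_neq p q (a : 'I_p) (b : 'I_q) : (@lshift p q a == @rshift p q b) = false.
Proof. by apply/negbTE; rewrite -val_eqE /= neq_ltn (leq_trans (ltn_ord a)) ?leq_addr. Qed.

Lemma bdiag_block p q (P1 : parray p) (P2 : parray q) i j s :
  bdiag P1 P2 i j = Some s -> (i < p) = (j < p) /\ (i < p) = (s < p).
Proof.
rewrite /bdiag; case: (split_ordP i) => a _; case: (split_ordP j) => b _ //.
  by case: (P1 a b) => //= x [<-]; rewrite /= !ltn_ord.
by case: (P2 a b) => //= x [<-]; rewrite /= !ltnNge !leq_addr.
Qed.

Lemma card_sum_set (A B : finType) (G : pred (A + B)) :
  #|[set y | G y]| = #|[set a | G (inl a)]| + #|[set b | G (inr b)]|.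
Proof.
have -> : [set y | G y] = inl @: [set a | G (inl a)] :|: inr @: [set b | G (inr b)].
  apply/setP => -[a|b]; rewrite !inE; apply/idP/orP.
  - by move=> H; left; apply/imsetP; exists a; rewrite ?inE.
  - by case=> /imsetP [x]; rewrite inE => H E; case: E => // ->.
  - by move=> H; right; apply/imsetP; exists b; rewrite ?inE.
  - by case=> /imsetP [x]; rewrite inE => H E; case: E => // ->.
rewrite cardsU (card_imset _ (@inl_inj _ _)) (card_imset _ (@inr_inj _ _)).
rewrite (_ : _ :&: _ = set0) ?cards0 ?subn0 //.
apply/setP => y; rewrite !inE; apply/andP => -[/imsetP [x _ ->] /imsetP [z _]] //.
Qed.

Lemma card_split p q (F : pred 'I_(p + q)) :
  #|[set j | F j]| = #|[set y : 'I_p + 'I_q | F (unsplit y)]|.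
Proof.
rewrite -(card_imset _ (can_inj (@unsplitK p q))).
apply: eq_card => j; rewrite !inE; apply/idP/imsetP.
  by move=> H; exists (split j); rewrite ?inE splitK.
by case=> y; rewrite inE => H ->.
Qed.

Lemma bdiag_hom p q k (P1 : parray p) (P2 : parray q) :
  k_homogeneous_pls k P1 -> k_homogeneous_pls k P2 -> k_homogeneous_pls k (bdiag P1 P2).
Proof.
move=> [[R1 C1] S1 H1 V1] [[R2 C2] S2 H2 V2].
split.
- split.
  + move=> r c1 c2 s; rewrite /bdiag.
    case: (split_ordP r) => a _; case: (split_ordP c1) => b1 ->; case: (split_ordP c2) => b2 -> //.
    * case E1: (P1 a b1) => [x1|] //= [<-]; case E2: (P1 a b2) => [x2|] //= /Some_inj /lshift_inj Ex.
      by rewrite Ex in E2; rewrite (R1 _ _ _ _ E1 E2).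
    * case E1: (P2 a b1) => [x1|] //= [<-]; case E2: (P2 a b2) => [x2|] //= /Some_inj /rshift_inj Ex.
      by rewrite Ex in E2; rewrite (R2 _ _ _ _ E1 E2).
  + move=> c r1 r2 s; rewrite /bdiag.
    case: (split_ordP c) => a _; case: (split_ordP r1) => b1 ->; case: (split_ordP r2) => b2 -> //.
    * case E1: (P1 b1 a) => [x1|] //= [<-]; case E2: (P1 b2 a) => [x2|] //= /Some_inj /lshift_inj Ex.
      by rewrite Ex in E2; rewrite (C1 _ _ _ _ E1 E2).
    * case E1: (P2 b1 a) => [x1|] //= [<-]; case E2: (P2 b2 a) => [x2|] //= /Some_inj /rshift_inj Ex.
      by rewrite Ex in E2; rewrite (C2 _ _ _ _ E1 E2).
- move=> s; case: (split_ordP s) => c ->.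
  + rewrite -(S1 c) -(card_imset _ (f := fun z : 'I_p * 'I_p => (lshift q z.1, lshift q z.2))); last first.
      move=> [a1 b1] [a2 b2] E; congr pair; apply: lshift_inj; [exact: (congr1 fst E)|exact: (congr1 snd E)].
    apply: eq_card => -[i j]; rewrite !inE /bdiag /=; apply/idP/imsetP.
    * case: (split_ordP i) => a ->; case: (split_ordP j) => b -> //.
        case E: (P1 a b) => [x|] //= /eqP /Some_inj /lshift_inj Ex.
        by exists (a, b); rewrite // inE /= E Ex.
      by case: (P2 a b) => [x|] //= /eqP /Some_inj /eqP; rewrite eq_sym lr_neq.
    * case=> -[a b]; rewrite inE /= => /eqP E [-> ->].
      by rewrite !split_l E.
  + rewrite -(S2 c) -(card_imset _ (f := fun z : 'I_q * 'I_q => (rshift p z.1, rshift p z.2))); last first.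
      move=> [a1 b1] [a2 b2] E; congr pair; apply: rshift_inj; [exact: (congr1 fst E)|exact: (congr1 snd E)].
    apply: eq_card => -[i j]; rewrite !inE /bdiag /=; apply/idP/imsetP.
    * case: (split_ordP i) => a ->; case: (split_ordP j) => b -> //.
        by case: (P1 a b) => [x|] //= /eqP /Some_inj /eqP; rewrite lr_neq.
      case E: (P2 a b) => [x|] //= /eqP /Some_inj /rshift_inj Ex.
      by exists (a, b); rewrite // inE /= E Ex.
    * case=> -[a b]; rewrite inE /= => /eqP E [-> ->].
      by rewrite !split_r E.
- move=> r; rewrite card_split card_sum_set.
  case: (split_ordP r) => a ->.
  + rewrite -[k]addn0 -(H1 a); congr (_ + _).
      by apply: eq_card => b; rewrite !inE /bdiag /= !split_l; case: (P1 a b).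
    by apply: eq_card0 => b; rewrite !inE /bdiag /= split_l split_r.
  + rewrite -[k]add0n -(H2 a); congr (_ + _).
      by apply: eq_card0 => b; rewrite !inE /bdiag /= split_l split_r.
    by apply: eq_card => b; rewrite !inE /bdiag /= !split_r; case: (P2 a b).
- move=> c; rewrite card_split card_sum_set.
  case: (split_ordP c) => a ->.
  + rewrite -[k]addn0 -(V1 a); congr (_ + _).
      by apply: eq_card => b; rewrite !inE /bdiag /= !split_l; case: (P1 b a).
    by apply: eq_card0 => b; rewrite !inE /bdiag /= split_l split_r.
  + rewrite -[k]add0n -(V2 a); congr (_ + _).
      by apply: eq_card0 => b; rewrite !inE /bdiag /= split_l split_r.
    by apply: eq_card => b; rewrite !inE /bdiag /= !split_r; case: (P2 b a).
Qed.

Local Open Scope ring_scope.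
Definition fullsq N' : parray N'.+1 := fun i j => Some (i + j).
Arguments fullsq : clear implicits.

Lemma fullsq_hom N' : k_homogeneous_pls N'.+1 (fullsq N').
Proof.
split.
- split.
  + by move=> r c1 c2 s /Some_inj <- /Some_inj /(addrI _).
  + by move=> c r1 r2 s /Some_inj <- /Some_inj /(addIr _).
- move=> s; rewrite -[in RHS](card_ord N'.+1) -cardsT.
  rewrite -(card_imset _ (f := fun i : 'I_N'.+1 => (i, s - i))); last first.
    by move=> a b /(congr1 fst).
  apply: eq_card => -[i j]; rewrite !inE /fullsq; apply/eqP/imsetP.
  + by move=> /Some_inj <-; exists i => //; rewrite addrC addKr.
  + by case=> x _ [-> ->]; rewrite addrC subrK.
- by move=> r; rewrite -[in RHS](card_ord N'.+1) -cardsT; apply: eq_card => c; rewrite !inE.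
- by move=> c; rewrite -[in RHS](card_ord N'.+1) -cardsT; apply: eq_card => r; rewrite !inE.
Qed.
Local Close Scope ring_scope.

Lemma hom_exists N k (hk0 : (0 < k)%N) (hkN : (k <= N)%N) :
  exists P : parray N, k_homogeneous_pls k P.
Proof.
case: N hkN => [|N'] hkN; first by move: hk0; rewrite leqNgt ltnS leqn0 => /negP; case; apply/eqP; ssrlia.
case: (eqVneq k N'.+1) => [->|Hne]; first by exists (fullsq N'); apply: fullsq_hom.
have Hk : (k < N'.+1)%N by rewrite ltn_neqAle Hne hkN.
set t := k./2; set ev := ~~ odd k.
have Hkd := odd_double_half k; rewrite -mul2n in Hkd.
have Et : t = k./2 by [].
have HK : ((2*t).+1 <= N'.+1)%N.
  by rewrite /t; case: (odd k) Hkd => /= Hkd; ssrlia.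
have Hcard : #|DK N' t ev| = k.
  by rewrite card_DK // /ev; case: (odd k) Hkd => /= Hkd; ssrlia.
exists (band (DK N' t ev) (gK N' t)).
rewrite -Hcard; apply: (band_hom (h := hK N' t)).
- exact: hghK.
- exact: gK_inj.
- exact: hK_inj.
Qed.

Lemma caseA p q k (hk1 : (1 < k)%N) (hkq : (k <= q)%N) (hqp : (q <= p)%N) (hp : (p <= q.+1)%N)
  (hnum : (p * p + q * q < (p + q) * k + p * q)%N) :
  exists P : parray (p + q), k_homogeneous_pls k P /\ ~ completable P.
Proof.
have [P1 HP1] := hom_exists (ltnW hk1) (leq_trans hkq hqp).
have [P2 HP2] := hom_exists (ltnW hk1) hkq.
have HB := bdiag_hom HP1 HP2.
exists (bdiag P1 P2); split => //.
apply: (@block_obstruction (p + q) p k _ (leq_addr q p)); rewrite ?addKn //.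
exact: bdiag_block.
Qed.

Close Scope ring_scope.
Open Scope nat_scope.

Theorem theorem5p6 (n k : nat) (hk1 : 1 < k) (hkn : k < n) (hk4 : n < 4 * k) :
  exists P : parray n, k_homogeneous_pls k P /\ ~ completable P.
Proof.
case: (leqP n (2 * k)) => H2.
  case: (boolP (odd n && (k == n.-1))) => HC; last exact: caseB.
  case/andP: HC => Ho /eqP Ek.
  case: n hkn hk4 H2 Ho Ek => [|[|[|N'']]] hkn hk4 H2 Ho Ek; try (exfalso; ssrlia).
  rewrite Ek /=; exact: caseC.
have Hn := odd_double_half n; rewrite -mul2n in Hn.
have En : n = (n./2 + odd n) + n./2 by ssrlia.
rewrite En; apply: caseA.
- exact: hk1.
- by case: (odd n) Hn => /= Hn; ssrlia.
- by ssrlia.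
- by case: (odd n) Hn => /= Hn; ssrlia.
- case: (odd n) Hn => /= Hn.
  + have Hq : 1 < n./2 by ssrlia.
    move: Hn hk4 Hq; set q := n./2 => Hn hk4 Hq.
    have {Hn hk4} Hk : q + 1 <= 2 * k by ssrlia.
    move/leP: Hk => Hk; move/leP: Hq => Hq; apply/ltP.
    unfold addn, subn, muln, addn_rec, subn_rec, muln_rec in * ; nia.
  + move: Hn hk4; set q := n./2 => Hn hk4.
    have Hq : 0 < q by ssrlia.
    have {Hn hk4} Hk : q < 2 * k by ssrlia.
    move/ltP: Hk => Hk; move/ltP: Hq => Hq; apply/ltP.
    unfold addn, subn, muln, addn_rec, subn_rec, muln_rec in * ; nia.
Qed.
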